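(* Let $p\geq 3$ be a prime, $u\in\{1,\ldots,p-1\}$ and $s\geq 2$ an integer. Suppose that $\nu_{p}\big(A_{p,(p-1)(up^s-1)}(m)\big)\leq s$ for all integers $m>up^{s}$. Then for every integer $n>up^{s}$, $$\nu_{p}\big(A_{p,(p-1)(up^s-1)}(pn)\big)=\nu_{p}\big(A_{p,(p-1)(up^s-1)}(pn+1)\big)=\cdots=\nu_{p}\big(A_{p,(p-1)(up^s-1)}(pn+p-1)\big).$$
   Context: For an integer $m\geq 2$ and a positive integer $k$, the integers $A_{m,k}(n)$, $n\in\mathbb{N}=\{0,1,2,\ldots\}$, are defined by the formal power series identity $\prod_{i=0}^{\infty}\big(1-x^{m^{i}}\big)^{-k}=\sum_{n=0}^{\infty}A_{m,k}(n)x^{n}$. For a prime $p$, $\nu_p(n)$ denotes the $p$-adic valuation of the integer $n$, with $\nu_p(0)=+\infty$. *)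

(* Defs.v *)
From mathcomp Require Import all_boot all_order all_algebra.
Set Implicit Arguments. Unset Strict Implicit. Unset Printing Implicit Defensive.
Import GRing.Theory Num.Theory.
Local Open Scope ring_scope.

(* Truncation of prod_{i>=0} (1 - x^(m^i))^(-k): for i <= n and j <= n we keep
   the terms C(j+k-1, j) x^(m^i * j) of (1 - x^(m^i))^(-k).  Since m >= 2,
   factors with i > n and terms of degree > n do not affect the coefficient
   of x^n, which is A_{m,k}(n). *)
Definition Atrunc (m k n : nat) : {poly int} :=
  \prod_(i < n.+1) \sum_(j < n.+1) ('C(j + k - 1, j))%:R *: 'X^(m ^ i * j).

Definition A (m k n : nat) : int := (Atrunc m k n)`_n.

(* p-adic valuation on integers, with nu_p(0) = +oo encoded as None. *)
Definition nu (p : nat) (z : int) : option nat :=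
  if z == 0 then None else Some (logn p `|z|%N).

(* Main.v *)
Require Import Defs.
From mathcomp Require Import all_boot all_order all_algebra ring zify.
Unset Printing Implicit Defensive.
Import GRing.Theory Num.Theory.
Local Open Scope ring_scope.

Definition cg (d : int) (N : nat) (P Q : {poly int}) :=
  forall i, (i <= N)%N -> (d %| (P - Q)`_i)%Z.

Lemma cg_refl d N P : cg d N P P.
Proof. by move=> i _; rewrite subrr coef0 dvdz0. Qed.
Lemma cg_sym d N P Q : cg d N P Q -> cg d N Q P.
Proof. by move=> h i hi; rewrite -opprB coefN rpredN h. Qed.
Lemma cg_trans d N P Q R : cg d N P Q -> cg d N Q R -> cg d N P R.
Proof.
move=> h1 h2 i hi.
have -> : P - R = (P - Q) + (Q - R) by rewrite addrA subrK.
by rewrite coefD rpredD ?h1 ?h2.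
Qed.
Lemma cg0M d N (R S : {poly int}) : (forall i, (i <= N)%N -> (d %| R`_i)%Z) ->
  forall i, (i <= N)%N -> (d %| (R * S)`_i)%Z.
Proof.
move=> h i hi; rewrite coefM rpred_sum // => j _; apply: dvdz_mulr; apply: h.
by apply: leq_trans hi; rewrite -ltnS.
Qed.
Lemma cgM d N P Q P' Q' : cg d N P Q -> cg d N P' Q' -> cg d N (P * P') (Q * Q').
Proof.
move=> h1 h2 i hi.
have -> : P * P' - Q * Q' = (P - Q) * P' + (P' - Q') * Q.
  by ring.
by rewrite coefD rpredD // ?(cg0M d N _ _ h1 i hi) ?(cg0M d N _ _ h2 i hi).
Qed.
Lemma cgMl d N (P P' Q' : {poly int}) : cg d N P' Q' -> cg d N (P * P') (P * Q').
Proof. by move=> h; apply: cgM => //; apply: cg_refl. Qed.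
Lemma cgMr d N (P Q P' : {poly int}) : cg d N P Q -> cg d N (P * P') (Q * P').
Proof. by move=> h; apply: cgM => //; apply: cg_refl. Qed.
Lemma cg_exp d N P Q n : cg d N P Q -> cg d N (P ^+ n) (Q ^+ n).
Proof.
move=> h; elim: n => [|n IH]; first by rewrite !expr0; apply: cg_refl.
by rewrite !exprS; apply: cgM.
Qed.
Lemma cg_prod d N L (F G : 'I_L -> {poly int}) :
  (forall i, cg d N (F i) (G i)) ->
  cg d N (\prod_(i < L) F i) (\prod_(i < L) G i).
Proof.
move=> h; apply: (big_ind2 (cg d N)); first exact: cg_refl.
  by move=> *; apply: cgM.
by move=> i _; apply: h.
Qed.
Lemma cg_comp d N P Q q : (0 < q)%N -> cg d N P Q ->
  cg d N (P \Po 'X^q) (Q \Po 'X^q).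
Proof.
move=> q0 h i hi; rewrite -comp_polyB coef_comp_poly_Xn //.
case: ifP => _; last exact: dvdz0.
apply: h; exact: leq_trans (leq_div _ _) hi.
Qed.
Lemma cg_dvd d d' N P Q : (d' %| d)%Z -> cg d N P Q -> cg d' N P Q.
Proof. by move=> hd h i hi; apply: dvdz_trans hd (h i hi). Qed.
Lemma cg_le d N N' P Q : (N' <= N)%N -> cg d N P Q -> cg d N' P Q.
Proof. by move=> hN h i hi; apply: h; exact: leq_trans hi hN. Qed.
Lemma cg0 d N P Q : cg 0 N P Q -> cg d N P Q.
Proof. by apply: cg_dvd; apply: dvdz0. Qed.

Definition dva (d : int) (R : {poly int}) := forall i, (d %| R`_i)%Z.
Lemma dva_mull d (R S : {poly int}) : dva d R -> dva d (S * R).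
Proof. by move=> h i; rewrite mulrC; apply: (cg0M d i) => // j _; apply: h. Qed.
Lemma dva_mulr d (R S : {poly int}) : dva d R -> dva d (R * S).
Proof. by move=> h i; apply: (cg0M d i) => // j _; apply: h. Qed.
Lemma dva_mul d e (R S : {poly int}) : dva d R -> dva e S -> dva (d * e) (R * S).
Proof. by move=> h1 h2 i; rewrite coefM rpred_sum // => j _; apply: dvdz_mul. Qed.
Lemma dva_exp d R n : dva d R -> dva (d ^+ n) (R ^+ n).
Proof.
move=> h; elim: n => [|n IH]; first by move=> i; rewrite expr0 dvd1z.
by rewrite !exprS; apply: dva_mul.
Qed.
Lemma dva_dvd d d' R : (d' %| d)%Z -> dva d R -> dva d' R.
Proof. by move=> hd h i; apply: dvdz_trans hd (h i). Qed.
Lemma dva_muln d (p m : nat) R : (p %| m)%N -> dva d R -> dva (d * p%:Z) (R *+ m).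
Proof.
move=> hp h i; rewrite coefMn -mulr_natr; apply: dvdz_mul => //.
by rewrite natz dvdzE.
Qed.
Lemma dva_cg d N P Q : dva d (P - Q) -> cg d N P Q.
Proof. by move=> h i _; apply: h. Qed.
Lemma coef_1subX m i : ((1 - 'X : {poly int})^+m)`_i = (-1)^+i * ('C(m,i))%:R.
Proof.
rewrite exprDn.
have -> : \sum_(j < m.+1) ((1 : {poly int}) ^+ (m - j) * (- 'X) ^+ j) *+ 'C(m, j)
   = \sum_(j < m.+1) ((-1)^+j * ('C(m,j))%:R) *: 'X^j.
  apply: eq_bigr => j _.
  by rewrite expr1n mul1r -scaleN1r exprZn -scaler_nat scalerA mulrC.
rewrite -(poly_def (m.+1) (fun j => (-1)^+j * ('C(m,j))%:R)) coef_poly; case: ltnP => // hi.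
by rewrite bin_small // mulr0.
Qed.

Lemma frob1 p : prime p -> odd p -> dva p%:Z ((1 - 'X)^+p - (1 - 'X^p)).
Proof.
move=> pp op i; rewrite coefB coef_1subX coefB coef1 coefXn.
have p0 := prime_gt0 pp.
case: (ltngtP i p) => hi /=.
- case: i hi => [|i] hi; first by rewrite bin0 expr0 mul1r subrr dvdz0.
  rewrite /= !subr0; apply: dvdz_mull.
  by rewrite natz dvdzE /= prime_dvd_bin // hi.
- rewrite bin_small // mulr0 (gtn_eqF (leq_ltn_trans (leq0n _) hi)) /=.
  by rewrite subrr dvdz0.
- subst i; rewrite binn (negbTE (lt0n_neq0 p0)) /=.
  by rewrite -signr_odd op expr1 mulr1 sub0r subrr dvdz0.
Qed.

Lemma dva_mulnn d R n : dva d R -> dva d (R *+ n).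
Proof. by move=> h i; rewrite coefMn rpredMn. Qed.

Lemma frob_step p t (A B : {poly int}) : prime p -> (0 < t)%N ->
  dva (p%:Z ^+ t) (A - B) -> dva (p%:Z ^+ t.+1) (A^+p - B^+p).
Proof.
move=> pp t0 h; set C := A - B.
have -> : A = B + C by rewrite /C addrC subrK.
rewrite exprDn big_ord_recl /= subn0 expr0 mulr1 bin0 mulr1n [B^+p + _]addrC addrK.
move=> i; rewrite coef_sum rpred_sum // => j _.
have hj := ltn_ord j; rewrite /bump leq0n add1n; move: i.
case: (ltngtP j.+1 p) => hjp.
- rewrite (exprSr (p%:Z) t); apply: dva_muln; first by rewrite prime_dvd_bin // hjp.
  by apply: dva_mull; rewrite exprS; apply: dva_mulr.
- by move: hjp; rewrite ltnNge hj.
- rewrite hjp; apply: dva_mulnn; apply: dva_mull.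
  apply: (dva_dvd _ _ _ _ (dva_exp _ _ p h)); rewrite -exprM; apply: dvdz_exp2l.
  have p2 := prime_gt1 pp; nia.
Qed.

Lemma frob_iter p t : prime p -> odd p ->
  dva (p%:Z ^+ t.+1) ((1 - 'X)^+(p ^ t.+1) - (1 - 'X^p)^+(p ^ t)).
Proof.
move=> pp op; elim: t => [|t IH]; first by rewrite expn1 expn0 ?expr1; apply: frob1.
have e1 : (1 - 'X : {poly int})^+(p ^ t.+2) = ((1 - 'X)^+(p ^ t.+1))^+p.
  by rewrite -exprM -expnSr.
have e2 : (1 - 'X^p : {poly int})^+(p ^ t.+1) = ((1 - 'X^p)^+(p ^ t))^+p.
  by rewrite -exprM -expnSr.
rewrite e1 e2; exact: (frob_step p t.+1 _ _ pp (ltn0Sn t) IH).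
Qed.

Lemma dva_pow d (A B : {poly int}) w : dva d (A - B) -> dva d (A^+w - B^+w).
Proof. by move=> h; rewrite subrXX; apply: dva_mulr. Qed.

Lemma frob_main p s w : prime p -> odd p -> (0 < s)%N ->
  dva (p%:Z ^+ s) ((1 - 'X)^+(p ^ s * w) - (1 - 'X^p)^+(p ^ s.-1 * w)).
Proof.
move=> pp op; case: s => // s _; rewrite !exprM; apply: dva_pow; exact: frob_iter.
Qed.

Definition Tk (k M : nat) : {poly int} := \sum_(j < M) ('C(j + k - 1, j))%:R *: 'X^j.

Lemma coefT k M i : (Tk k M)`_i = if (i < M)%N then ('C(i + k - 1, i))%:R else 0.
Proof. by rewrite /Tk -(poly_def M (fun j => ('C(j + k - 1, j))%:R)) coef_poly. Qed.

Lemma Tstep k M N : (N < M)%N -> cg 0 N ((1 - 'X) * Tk k.+1 M) (Tk k M).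
Proof.
move=> hM i hi; rewrite mulrBl mul1r !coefB coefXM !coefT.
have hiM : (i < M)%N by apply: leq_ltn_trans hM.
rewrite hiM; case: i hi hiM => [|i] hi hiM /=.
  by rewrite !bin0 subr0 subrr dvdz0.
rewrite (ltnW hiM).
have e1 : (i.+1 + k.+1 - 1 = (i + k).+1)%N by lia.
have e2 : (i + k.+1 - 1 = i + k)%N by lia.
have e3 : (i.+1 + k - 1 = i + k)%N by lia.
by rewrite e1 e2 e3 binS natrD addrK subrr dvdz0.
Qed.

Lemma Tzero M N : (N < M)%N -> cg 0 N (Tk 0 M) 1.
Proof.
move=> hM i hi; rewrite coefB coefT coef1.
have hiM : (i < M)%N by apply: leq_ltn_trans hM.
rewrite hiM; case: i hi hiM => [|i] hi hiM /=.
  by rewrite bin0 subrr dvdz0.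
by rewrite addn0 subn1 /= bin_small // subrr dvdz0.
Qed.

Lemma Tinv k M N : (N < M)%N -> cg 0 N ((1 - 'X)^+k * Tk k M) 1.
Proof.
move=> hM; elim: k => [|k IH]; first by rewrite expr0 mul1r; apply: Tzero.
rewrite exprSr -mulrA; apply: cg_trans IH; apply: cgMl; exact: Tstep.
Qed.

Lemma T_trunc k M M' N : (N < M)%N -> (N < M')%N -> cg 0 N (Tk k M) (Tk k M').
Proof.
move=> h1 h2 i hi; rewrite coefB !coefT (leq_ltn_trans hi h1) (leq_ltn_trans hi h2).
by rewrite subrr dvdz0.
Qed.

Definition S (k q M : nat) : {poly int} :=
  \sum_(j < M) ('C(j + k - 1, j))%:R *: 'X^(q * j).

Lemma S_comp k q M : S k q M = Tk k M \Po 'X^q.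
Proof.
rewrite /Tk linear_sum; apply: eq_bigr => j _.
by rewrite linearZ /= comp_Xn_poly exprM.
Qed.

Definition Gen (k p L M : nat) : {poly int} := \prod_(i < L) S k (p ^ i) M.

Lemma Atrunc_Gen p k N : Atrunc p k N = Gen k p N.+1 N.+1.
Proof. by []. Qed.

Lemma Gen_rec k p L M : Gen k p L.+1 M = Tk k M * (Gen k p L M \Po 'X^p).
Proof.
rewrite /Gen big_ord_recl expn0 S_comp expr1 comp_polyXr; congr (_ * _).
rewrite rmorph_prod; apply: eq_bigr => i _.
rewrite /= !S_comp -comp_polyA comp_Xn_poly -exprM.
by rewrite /bump leq0n add1n expnS.
Qed.

Lemma S_trunc k q M M' N : (0 < q)%N -> (N < M)%N -> (N < M')%N ->
  cg 0 N (S k q M) (S k q M').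
Proof. by move=> q0 h1 h2; rewrite !S_comp; apply: cg_comp => //; apply: T_trunc. Qed.

Lemma S_one k q M N : (N < q)%N -> (0 < M)%N -> cg 0 N (S k q M) 1.
Proof.
move=> hq hM i hi; rewrite coefB S_comp coef_comp_poly_Xn; last exact: leq_ltn_trans (leq0n N) hq.
rewrite coef1; case: i hi => [|i] hi.
  by rewrite dvdn0 div0n coefT hM bin0 subrr dvdz0.
have -> : (q %| i.+1)%N = false.
  apply/negP => /dvdn_leq h; have := h (ltn0Sn i); rewrite leqNgt.
  by rewrite (leq_ltn_trans hi hq).
by rewrite subrr dvdz0.
Qed.

Lemma Gen_lev k p M N d : (1 < p)%N -> (0 < M)%N ->
  cg 0 N (Gen k p (N.+1 + d) M) (Gen k p N.+1 M).
Proof.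
move=> p1 M0; elim: d => [|d IH]; first by rewrite addn0; apply: cg_refl.
rewrite addnS /Gen big_ord_recr /=; rewrite -[X in cg _ _ _ X]mulr1.
apply: cgM; first exact: IH.
apply: S_one => //; apply: leq_trans (ltn_expl _ p1).
lia.
Qed.

Lemma Gen_trunc k p L L' M M' N : (1 < p)%N -> (N < L)%N -> (N < L')%N ->
  (N < M)%N -> (N < M')%N -> cg 0 N (Gen k p L M) (Gen k p L' M').
Proof.
move=> p1 hL hL' hM hM'.
have p0 : (0 < p)%N by apply: ltnW.
have h1 : cg 0 N (Gen k p L M) (Gen k p L M').
  by apply: cg_prod => i; apply: S_trunc => //; rewrite expn_gt0 p0.
apply: (cg_trans _ _ _ _ _ h1).
have [d ->] : exists d, L = (N.+1 + d)%N by exists (L - N.+1)%N; rewrite subnKC.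
have [d' ->] : exists d, L' = (N.+1 + d)%N by exists (L' - N.+1)%N; rewrite subnKC.
have M0 : (0 < M')%N by apply: leq_ltn_trans hM'.
apply: (cg_trans _ _ _ _ _ (Gen_lev k p M' N d p1 M0)); apply: cg_sym; exact: (Gen_lev k p M' N d' p1 M0).
Qed.

Lemma T0_cong p s w k e K' N : prime p -> odd p -> (0 < s)%N ->
  (k + e = p ^ s * w)%N -> K' = (p ^ s.-1 * w)%N ->
  cg (p%:Z ^+ s) N (Tk k N.+1) ((1 - 'X)^+e * (Tk K' N.+1 \Po 'X^p)).
Proof.
move=> pp op s0 hk hK.
set E := Tk K' N.+1 \Po 'X^p.
have p0 := prime_gt0 pp.
have h1 : cg 0 N ((1 - 'X)^+k * Tk k N.+1) 1 by apply: Tinv.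
have h2 : cg 0 N ((1 - 'X^p)^+K' * E) 1.
  have -> : (1 - 'X^p : {poly int})^+K' * E = ((1 - 'X)^+K' * Tk K' N.+1) \Po 'X^p.
    by rewrite rmorphM rmorphXn rmorphB rmorph1 /= comp_polyX.
  rewrite -[X in cg _ _ _ X](rmorph1 (comp_poly ('X^p : {poly int}))).
  by apply: cg_comp => //; apply: Tinv.
have h3 : cg (p%:Z ^+ s) N ((1 - 'X)^+(k + e)) ((1 - 'X^p)^+K').
  by rewrite hk hK; apply: dva_cg; apply: frob_main.
have hV : cg (p%:Z ^+ s) N ((1 - 'X)^+k * ((1 - 'X)^+e * E)) 1.
  rewrite mulrA -exprD; apply: (cg_trans _ _ _ _ _ (cgMr _ _ _ _ E h3)); exact: cg0.
rewrite -[X in cg _ _ X _]mulr1.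
apply: (cg_trans _ _ _ _ _ (cgMl _ _ (Tk k N.+1) _ _ (cg_sym _ _ _ _ hV))).
rewrite mulrCA mulrA -[X in cg _ _ _ X]mul1r.
by apply: cgMr; apply: cg0.
Qed.

Lemma A_cong p s w k e K' N : prime p -> odd p -> (0 < s)%N ->
  (k + e = p ^ s * w)%N -> K' = (p ^ s.-1 * w)%N ->
  cg (p%:Z ^+ s) N (Atrunc p k N)
     ((1 - 'X)^+e * ((Tk K' N.+1 * Gen k p N N.+1) \Po 'X^p)).
Proof.
move=> pp op s0 hk hK.
rewrite Atrunc_Gen Gen_rec rmorphM /= mulrA; apply: cgMr; exact: (T0_cong p s w k e K' N).
Qed.

Lemma ndvd p a b : (0 < b < p)%N -> ~~ (p %| p * a + b)%N.
Proof.
move=> /andP[b0 bp]; rewrite dvdn_addr ?dvdn_mulr //.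
by apply/negP => /(dvdn_leq b0); rewrite leqNgt bp.
Qed.

Lemma coef_final p n j (D : {poly int}) : prime p -> (0 < n)%N -> (j < p)%N ->
  ((1 - 'X)^+(p.-1) * (D \Po 'X^p))`_(p * n + j)
    = ((-1)^+j * ('C(p.-1, j))%:R) * D`_n.
Proof.
move=> pp n0 jp; have p0 := prime_gt0 pp.
rewrite coefM.
have jN : (j < (p * n + j).+1)%N by rewrite ltnS leq_addl.
rewrite (bigD1 (Ordinal jN)) //= big1 ?addr0.
  by rewrite coef_1subX addnK coef_comp_poly_Xn // dvdn_mulr // mulKn.
move=> i hij.
have hij' : (i : nat) != j.
  by apply: contra hij => /eqP h; apply/eqP; apply: val_inj.
rewrite coef_1subX.
case: (ltnP i p) => ip; last first.
  by rewrite bin_small ?mulr0 ?mul0r //; rewrite prednK.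
rewrite coef_comp_poly_Xn //; case: ifP => hd; last by rewrite mulr0.
exfalso; move: hd ip hij'; move: (nat_of_ord i) => i' hd ip hij'; move: hd.
case: (ltngtP i' j) => hij2.
- have -> : (p * n + j - i' = p * n + (j - i'))%N by lia.
  by rewrite (negbTE (ndvd _ _ _ _)) //; apply/andP; split; lia.
- have e : (p * n = p * n.-1 + p)%N by rewrite -mulnSr prednK.
  have -> : (p * n + j - i' = p * n.-1 + (p + j - i'))%N.
    rewrite e; move: (p * n.-1)%N => x; lia.
  by rewrite (negbTE (ndvd _ _ _ _)) //; apply/andP; split; lia.
- by move: hij'; rewrite hij2 eqxx.
Qed.

Lemma D_indep p k K' n N : (1 < p)%N -> (n < N)%N ->
  (Tk K' N.+1 * Gen k p N N.+1)`_n = (Tk K' n.+1 * Gen k p n.+1 n.+1)`_n.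
Proof.
move=> p1 nN.
have h : cg 0 n (Tk K' N.+1 * Gen k p N N.+1) (Tk K' n.+1 * Gen k p n.+1 n.+1).
  apply: cgM; first by apply: T_trunc => //; apply: ltnW.
  by apply: Gen_trunc => //; apply: ltnW.
by have := h n (leqnn n); rewrite dvd0z coefB subr_eq0 => /eqP.
Qed.

Lemma cong_main p s w k K' n j : prime p -> odd p -> (0 < s)%N ->
  (k + p.-1 = p ^ s * w)%N -> K' = (p ^ s.-1 * w)%N -> (0 < n)%N -> (j < p)%N ->
  (p%:Z ^+ s %| A p k (p * n + j)
     - ((-1)^+j * ('C(p.-1, j))%:R) * (Tk K' n.+1 * Gen k p n.+1 n.+1)`_n)%Z.
Proof.
move=> pp op s0 hk hK n0 jp.
have p1 := prime_gt1 pp.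
have := A_cong p s w k p.-1 K' (p * n + j)%N pp op s0 hk hK _ (leqnn _).
rewrite coefB coef_final // D_indep //; nia.
Qed.

Lemma val_eq p s (x y d a : int) : prime p -> coprimez (p%:Z) a ->
  (p%:Z ^+ s %| x - d)%Z -> (p%:Z ^+ s %| y - a * d)%Z -> x != 0 -> y != 0 ->
  (logn p `|x| <= s)%N -> (logn p `|y| <= s)%N -> logn p `|x| = logn p `|y|.
Proof.
move=> pp cop hxd hyd x0 y0 lx ly.
have key : forall t, (t <= s)%N -> (p%:Z ^+ t %| x)%Z = (p%:Z ^+ t %| y)%Z.
  move=> t ts; have hd : (p%:Z ^+ t %| p%:Z ^+ s)%Z by apply: dvdz_exp2l.
  have hx := dvdz_trans hd hxd; have hy := dvdz_trans hd hyd.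
  have copt : coprimez (p%:Z ^+ t) a by apply: coprimezXl.
  rewrite -(subrK d x) (rpredDl _ hx) -(subrK (a * d) y) (rpredDl _ hy).
  by rewrite Gauss_dvdzr.
have dv : forall z t, z != 0 -> (p%:Z ^+ t %| z)%Z = (t <= logn p `|z|)%N.
  move=> z t z0; rewrite dvdzE abszX /=.
  by rewrite pfactor_dvdn // absz_gt0.
apply/eqP; rewrite eqn_leq; apply/andP; split.
  by rewrite -dv // -key // dv.
by rewrite -dv // key // dv.
Qed.

Lemma bin_ndvd p j : prime p -> (j <= p.-1)%N -> ~~ (p %| 'C(p.-1, j))%N.
Proof.
move=> pp hj; apply/negP => hd.
have h1 : (p %| (p.-1)`!)%N by rewrite -(bin_fact hj) dvdn_mulr.
have := prime_gt1 pp => p1.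
have : (p %| ((p.-1)`!).+1)%N by rewrite -Wilson.
by rewrite -addn1 dvdn_addr // dvdn1 => /eqP h; move: p1; rewrite h.
Qed.

Close Scope ring_scope.

Theorem theorem3p1 (p u s : nat) :
  prime p -> 3 <= p -> 1 <= u <= p - 1 -> 2 <= s ->
  (forall m : nat, u * p ^ s < m ->
     exists v : nat, nu p (A p ((p - 1) * (u * p ^ s - 1)) m) = Some v /\ v <= s) ->
  forall n : nat, u * p ^ s < n ->
  forall j : nat, j <= p - 1 ->
    nu p (A p ((p - 1) * (u * p ^ s - 1)) (p * n + j)) =
    nu p (A p ((p - 1) * (u * p ^ s - 1)) (p * n)).
Proof.
move=> pp p3 /andP[u1 up] s2 hyp n hn j hj.
have op : odd p.
  by case: (even_prime pp) => // h; move: p3; rewrite h.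
have p0 := prime_gt0 pp.
have s0 : (0 < s)%N by apply: leq_trans s2.
set k := ((p - 1) * (u * p ^ s - 1))%N.
set w := ((p - 1) * u)%N.
have hk : (k + p.-1 = p ^ s * w)%N.
  have x0 : (0 < u * p ^ s)%N by rewrite muln_gt0 u1 expn_gt0 p0.
  rewrite /k /w -subn1 -mulnSr (subn1 (u * p ^ s)) prednK //.
  by rewrite mulnA mulnC.
have n0 : (0 < n)%N by apply: leq_ltn_trans hn.
have jp : (j < p)%N by rewrite -(prednK p0) ltnS -subn1.
have hy := cong_main p s w k (p ^ s.-1 * w)%N n j pp op s0 hk erefl n0 jp.
have hx := cong_main p s w k (p ^ s.-1 * w)%N n 0 pp op s0 hk erefl n0 p0.
rewrite addn0 expr0 bin0 !mul1r in hx.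
have hpn : (u * p ^ s < p * n)%N.
  by apply: leq_trans hn _; rewrite leq_pmull.
have [vx [hvx lvx]] := hyp _ hpn.
have [vy [hvy lvy]] := hyp _ (leq_trans hpn (leq_addr j _)).
move: hvx hvy lvx lvy; rewrite /nu.
case: eqP => // /eqP x0 [<-]; case: eqP => // /eqP y0 [<-] lx ly.
congr Some; symmetry; apply: (val_eq _ _ _ _ _ _ pp _ hx hy x0 y0 lx ly).
rewrite coprimezE abszMsign natz /= prime_coprime //.
by apply: bin_ndvd => //; rewrite -subn1.
Qed.
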